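(* Let $n\in\mathbb N$, $\epsilon\in[0,1)$, $\beta>0$, $\tau\in[0,1]$, and let $\mu$ be the uniform measure over $\mathbb F_2^n$. For $z\in\mathbb F_2^n$ define the loss function $l^z:\mathbb F_2^n\to[0,1]$, $l^z(y)=L(\mathrm d_{\mathrm{tr}}(|y\rangle\langle y|,|z\rangle\langle z|))=1-|\langle y|z\rangle|$ with $L(x)=1-\sqrt{1-x^2}$. Any (deterministic) algorithm that, given access to $\mathrm{Eval}_\tau(l^z)$ for unknown $z$, outputs some $y$ with $l^z(y)\le\epsilon$ for a set of $z$ of $\mu$-measure at least $\beta$, requires at least $(\beta-2^{-n})2^n$ queries. In particular, every loss function $l^z$, $z\in\mathbb F_2^n$, admits a narrow gorge with respect to the uniform measure over $\mathbb F_2^n$.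
   Context: $\mathrm d_{\mathrm{tr}}(\rho,\sigma)=\frac12\|\rho-\sigma\|_{\mathrm{tr}}$. The oracle $\mathrm{Eval}_\tau(l)$, queried with $y$, returns some value $v$ with $|v-l(y)|\le\tau$ (any such value). A family of loss functions $l^{(n)}:\Theta^{(n)}\to\mathbb R$ with measures $\nu^{(n)}$ on $\Theta^{(n)}$ admits a narrow gorge if (i) $\mathbb E_{\vartheta\sim\nu^{(n)}}[l^{(n)}(\vartheta)]-\min_\vartheta l^{(n)}(\vartheta)=\Omega(1/\mathrm{poly}(n))$ and (ii) for every $\delta>0$, $\Pr_{\vartheta\sim\nu^{(n)}}[|l^{(n)}(\vartheta)-\mathbb E_{\nu^{(n)}}[l^{(n)}]|>\delta]\le2^{-\Omega(n)}/\delta^2$. *)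

(* Defs.v *)
From HB Require Import structures.
From mathcomp Require Import all_boot all_order all_algebra.
From mathcomp Require Import all_classical all_reals all_analysis.
Set Implicit Arguments. Unset Strict Implicit. Unset Printing Implicit Defensive.
Import Order.TTheory GRing.Theory Num.Theory.
Local Open Scope ring_scope.

Notation bits n := 'rV['F_2]_n.

Section Defs.
Variable R : realType.

(* computational basis state |y>, as a real amplitude vector indexed by F_2^n *)
Definition ket n (y : bits n) : {ffun bits n -> R} :=
  [ffun x : bits n => (x == y)%:R].

Definition braket n (y z : bits n) : R := \sum_(x : bits n) ket y x * ket z x.

Definition lossz n (z : bits n) (y : bits n) : R := 1 - `|braket y z|.

Definition uniform_pmf (T : finType) (x : T) : R := (#|T|%:R)^-1.

(* The oracle Eval_tau(l): on query y it may return any v with |v - l y| <= tau *)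
Definition eval_ok (X : Type) (tau : R) (l : X -> R) (y : X) (v : R) : Prop :=
  `|v - l y| <= tau.

(* A deterministic adaptive algorithm making q queries to an oracle over X:
   the next query is a function of the answers received so far, and the final
   output is a function of all q answers. *)
Record algorithm (X : Type) := Algorithm {
  alg_query : seq R -> X;
  alg_output : seq R -> X }.

Definition valid_transcript (X : Type) (A : algorithm X) (q : nat)
  (tau : R) (l : X -> R) (ans : seq R) : Prop :=
  size ans = q /\
  forall i, (i < q)%N -> eval_ok tau l (alg_query A (take i ans)) (nth 0 ans i).

Definition alg_succeeds n (A : algorithm (bits n)) (q : nat) (tau eps : R)
  (z : bits n) : Prop :=
  forall ans, valid_transcript A q tau (lossz z) ans ->
    lossz z (alg_output A ans) <= eps.

Definition expect (T : finType) (nu : T -> R) (l : T -> R) : R :=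
  \sum_(x : T) nu x * l x.

Definition prob_dev (T : finType) (nu : T -> R) (l : T -> R) (delta : R) : R :=
  \sum_(x : T | delta < `|l x - expect nu l|) nu x.

Definition is_min (T : Type) (l : T -> R) (m : R) : Prop :=
  (exists x, l x = m) /\ forall x, m <= l x.

Definition narrow_gorge (Theta : nat -> finType)
  (nu : forall n, Theta n -> R) (l : forall n, Theta n -> R) : Prop :=
  (exists (C : R) (k N : nat), 0 < C /\
     forall n, (N <= n)%N -> forall m, is_min (l n) m ->
       C / (n%:R ^+ k) <= expect (nu n) (l n) - m) /\
  (exists (c C : R) (N : nat), 0 < c /\ 0 < C /\
     forall n, (N <= n)%N -> forall delta : R, 0 < delta ->
       prob_dev (nu n) (l n) delta <= C * (2 `^ (- (c * n%:R))) / delta ^+ 2).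

End Defs.

(* Main.v *)
Require Import Defs.
From HB Require Import structures.
From mathcomp Require Import all_boot all_order all_algebra.
From mathcomp Require Import all_classical all_reals all_analysis.
From mathcomp Require Import ring lra.
Import Order.TTheory GRing.Theory Num.Theory.
Local Open Scope ring_scope.

Section H.
Variable R : realType.

Lemma braketE n (y z : bits n) : braket R y z = (y == z)%:R.
Proof.
rewrite /braket (bigD1 y) //= big1 ?addr0.
  by rewrite !ffunE eqxx mul1r eq_sym.
by move=> x /negbTE xy; rewrite !ffunE xy mul0r.
Qed.

Lemma lossE n (z y : bits n) : lossz R z y = (y != z)%:R.
Proof. by rewrite /lossz braketE; case: eqP => _ /=; rewrite ?normr1 ?normr0 ?subrr ?subr0. Qed.

Lemma card_bits n : #|bits n| = (2 ^ n)%N.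
Proof. by rewrite card_mx card_Fp // mul1n. Qed.

Lemma sum_loss n (z : bits n) : \sum_x lossz R z x = (2 ^ n)%:R - 1.
Proof.
rewrite (bigD1 z) //= lossE eqxx add0r.
rewrite (eq_bigr (fun _ => 1)); last by move=> x xz; rewrite lossE xz.
rewrite sumr_const cardC1 card_bits.
have h : (0 < 2 ^ n)%N by rewrite expn_gt0.
by rewrite -(prednK h) mulrSr addrK.
Qed.


Lemma expect_loss n (z : bits n) :
  expect (@uniform_pmf R _) (lossz R z) = 1 - (2 ^+ n)^-1.
Proof.
rewrite /expect /uniform_pmf -mulr_sumr sum_loss card_bits natrX.
have h : (2 : R) ^+ n != 0 by rewrite expf_neq0 // pnatr_eq0.
by field.
Qed.

Lemma sq_loss n (z x : bits n) (E : R) :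
  (lossz R z x - E) ^+ 2 = lossz R z x * (1 - 2 * E) + E ^+ 2.
Proof. rewrite lossE; case: (x != z) => /=; ring. Qed.

Lemma prob_dev_bound n (z : bits n) (delta : R) : 0 < delta ->
  prob_dev (@uniform_pmf R _) (lossz R z) delta <= (2 ^+ n)^-1 / delta ^+ 2.
Proof.
move=> d0.
set p : R := (2 ^+ n)^-1.
have up : forall x : bits n, uniform_pmf R x = p.
  by move=> x; rewrite /uniform_pmf card_bits natrX.
rewrite /prob_dev expect_loss.
set E := 1 - p.
have p0 : 0 < p by rewrite invr_gt0 exprn_gt0.
have p1 : p <= 1 by rewrite invf_le1 ?exprn_gt0 // exprn_ege1 // ler1n.
apply: (@le_trans _ _ (\sum_x p * ((lossz R z x - E) ^+ 2 / delta ^+ 2))).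
  rewrite big_mkcond /=; apply: ler_sum => x _.
  case: ifP => hx; last first.
    by apply: mulr_ge0; [exact: ltW|]; apply: divr_ge0; rewrite ?sqr_ge0.
  rewrite up -[X in X <= _]mulr1; apply: ler_wpM2l; first exact: ltW.
  rewrite ler_pdivlMr ?exprn_gt0 // mul1r -(real_normK (num_real (lossz R z x - E))).
  by rewrite !expr2; apply: ler_pM => //; apply: ltW.
rewrite -mulr_sumr -mulr_suml.
under eq_bigr do rewrite sq_loss.
rewrite big_split /= -mulr_suml sum_loss sumr_const card_bits.
have hN : (2 ^+ n : R) * p = 1 by rewrite mulfV // gt_eqF ?exprn_gt0.
rewrite mulrA; apply: ler_wpM2r; first by rewrite invr_ge0 sqr_ge0.
rewrite -mulr_natr natrX mul1r /E.
move: hN p0 p1; set N := (2:R) ^+ n; move=> hN p0 p1.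
rewrite -[X in _ + X]mulr_natr natrX -/N.
have -> : p * ((N - 1) * (1 - 2 * (1 - p)) + (1 - p) ^+ 2 * N) = p - p * p.
  transitivity ((N * p - p) * (1 - 2 * (1 - p)) + (N * p) * (1 - p) ^+ 2); first by ring.
  by rewrite hN; ring.
nra.
Qed.


Lemma part1 (n : nat) (eps beta tau : R) :
     0 <= eps -> eps < 1 -> 0 < beta -> 0 <= tau -> tau <= 1 ->
     forall (q : nat) (A : algorithm R (bits n)),
       (exists S : {set bits n},
          (forall z, z \in S -> alg_succeeds A q tau eps z) /\
          beta <= #|S|%:R / (2 ^+ n)) ->
       (beta - (2 ^+ n)^-1) * 2 ^+ n <= q%:R.
Proof.
move=> e0 e1 b0 t0 t1 q A [S [HS Hb]].
set ones : seq R := nseq q 1.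
set Q := alg_output A ones :: [seq alg_query A (take i ones) | i <- iota 0 q].
have sub : S \subset [set x in Q].
  apply/fintype.subsetP => z zS; rewrite inE.
  apply/negPn/negP => /negP zQ.
  have := HS z zS ones.
  have vt : valid_transcript A q tau (lossz R z) ones.
    split; first by rewrite size_nseq.
    move=> i iq; rewrite /eval_ok nth_nseq iq lossE.
    have : alg_query A (take i ones) != z.
      apply/eqP => eq; apply: zQ; rewrite inE; apply/orP; right.
      by apply/mapP; exists i; rewrite ?mem_iota ?add0n // eq.
    by move=> ->; rewrite subrr normr0.
  move=> /(_ vt); rewrite lossE.
  have -> : alg_output A ones != z.
    by apply/eqP => eq; apply: zQ; rewrite inE eq eqxx.
  by move=> h; have := lt_le_trans e1 h; rewrite ltxx.
have cS : (#|S| <= q.+1)%N.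
  apply: (leq_trans (subset_leq_card sub)); rewrite cardsE.
  by apply: (leq_trans (card_size _)); rewrite /= size_map size_iota.
have N0 : (0 : R) < 2 ^+ n by rewrite exprn_gt0.
rewrite mulrBl mulVf ?gt_eqF // lerBlDr.
move: Hb; rewrite ler_pdivlMr //.
move=> h; apply: (le_trans h).
by rewrite -[1]/(1%:R) -natrD ler_nat addn1.
Qed.

End H.

Theorem mainTheorem13 (R : realType) :
  (forall (n : nat) (eps beta tau : R),
     0 <= eps -> eps < 1 -> 0 < beta -> 0 <= tau -> tau <= 1 ->
     forall (q : nat) (A : algorithm R (bits n)),
       (exists S : {set bits n},
          (forall z, z \in S -> alg_succeeds A q tau eps z) /\
          beta <= #|S|%:R / (2 ^+ n)) ->
       (beta - (2 ^+ n)^-1) * 2 ^+ n <= q%:R) /\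
  (forall z : forall n, bits n,
     @narrow_gorge R (fun n => 'rV['F_2]_n) (fun n => @uniform_pmf R _)
       (fun n => @lossz R n (z n))).
Proof.
split; first exact: part1.
move=> z; split.
  exists (2^-1), 0%N, 1%N; split; first by rewrite invr_gt0.
  move=> n n1 m [_ hm]; rewrite expr0 divr1 expect_loss.
  have : m <= 0 by have := hm (z n); rewrite lossE eqxx.
  have : (2 ^+ n : R)^-1 <= 2^-1.
    rewrite lef_pV2 ?posrE ?exprn_gt0 //.
    by rewrite -[X in X <= _]expr1 ler_eXn2l // ltr1n.
  lra.
exists 1, 1, 0%N; split; first exact: ltr01.
split; first exact: ltr01.
move=> n _ delta d0.
rewrite mul1r mul1r powRN powR_mulrn // -exprVn.
rewrite exprVn; exact: prob_dev_bound.
Qed.
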